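(* Let $n\ge 1$ and $N=\binom{2n}{n}$. There exists a listing $S_0,S_1,\ldots,S_{N-1}$ of all $n$-element subsets of $\{1,2,\ldots,2n\}$ such that (i) $S_{i+N/2}=\{1,\ldots,2n\}\setminus S_i$ for all $0\le i<N/2$, and (ii) for every $i$ (indices taken modulo $N$), $S_{i+1}=(S_i\setminus\{a\})\cup\{b\}$ for some $a\in S_i$, $b\notin S_i$, such that either every integer strictly between $a$ and $b$ belongs to $S_i$, or no integer strictly between $a$ and $b$ belongs to $S_i$.
   Context: Condition (ii) is the ''complementary strong minimal change property'': in terms of incidence vectors, consecutive vectors differ in exactly two bit positions, and the bits strictly between these two positions are all $1$ or all $0$. Condition (i) says the code is complementary. *)

(* Defs.v *)
From mathcomp Require Import all_boot.
Set Implicit Arguments. Unset Strict Implicit. Unset Printing Implicit Defensive.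

(* Ground set {1,...,2n} is modelled by 'I_(2n) = {0,...,2n-1} (shift by one,
   order preserving, so "strictly between" is unchanged). *)

Definition strictly_between (a b k : nat) : bool :=
  (minn a b < k) && (k < maxn a b).

Definition csmc_step (m : nat) (S T : {set 'I_m}) : Prop :=
  exists (a b : 'I_m),
    [/\ a \in S, b \notin S, T = (S :\ a) :|: [set b] &
        (forall k : 'I_m, strictly_between a b k -> k \in S) \/
        (forall k : 'I_m, strictly_between a b k -> k \notin S)].

(* Main.v *)
Require Import Defs.
From mathcomp Require Import all_boot zify.
Set Implicit Arguments. Unset Strict Implicit. Unset Printing Implicit Defensive.

Definition Aw m k := nseq k true ++ nseq (m-k) false.
Definition Bw m k := nseq (m-k) false ++ nseq k true.
Definition Cw m k := if k is k'.+1 then true :: (nseq (m-k) false ++ nseq k' true)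
                     else nseq m false.

Fixpoint FG (m : nat) : nat -> seq (seq bool) * seq (seq bool) :=
  match m with
  | 0 => fun k => if k is 0 then ([:: [::]], [:: [::]]) else ([::], [::])
  | m'.+1 => fun k => match k with
     | 0 => ([:: nseq m'.+1 false], [:: nseq m'.+1 false])
     | k'.+1 =>
                (map (cons true) (FG m' k').1 ++ map (cons false) (FG m' k).2,
                 map (cons true) (rev (FG m' k').1) ++ map (cons false) (FG m' k).1)
     end
  end.

Lemma count0_nseq (w : seq bool) : (count id w == 0) = (w == nseq (size w) false).
Proof. by elim: w => [|[] w IH] //=. Qed.

Lemma mem_cons_map (b c : bool) w s : (c :: w \in map (cons b) s) = (c == b) && (w \in s).
Proof.
apply/mapP/andP => [[x xs [-> ->]]|[/eqP -> ws]]; last by exists w.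
by rewrite eqxx.
Qed.

Lemma memFG m k w :
  (w \in (FG m k).1) = (size w == m) && (count id w == k) /\
  (w \in (FG m k).2) = (size w == m) && (count id w == k).
Proof.
elim: m k w => [|m IH] k w.
  case: k => [|k] /=; rewrite ?mem_seq1 ?in_nil.
    by case: w => [|c w] //=; rewrite andbF.
  by case: w => [|c w] //=.
case: k => [|k] /=.
  rewrite mem_seq1 count0_nseq.
  change (false :: nseq m false) with (nseq m.+1 false).
  suff -> : (w == nseq m.+1 false) = (size w == m.+1) && (w == nseq (size w) false) by [].
  case: (eqVneq (size w) m.+1) => [<-|ne] //.
  by apply/eqP => E; rewrite E size_nseq eqxx in ne.
case: w => [|c w]; first by rewrite !mem_cat; split; apply/negbTE/norP; split; apply/mapP => [[? _ //]].
rewrite !mem_cat !mem_cons_map /= eqSS mem_rev.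
case: c => /=; rewrite ?add1n ?add0n ?eqSS ?andbF ?orbF ?andTb ?andFb ?orFb.
  by rewrite !(proj1 (IH _ _)).
by rewrite !(proj1 (IH _ _)) !(proj2 (IH _ _)).
Qed.

Lemma sizeFG m k : size (FG m k).1 = 'C(m, k) /\ size (FG m k).2 = 'C(m, k).
Proof.
elim: m k => [|m IH] [|k] //=.
by split; rewrite !size_cat !size_map ?size_rev binS (proj1 (IH k)) ?(proj1 (IH k.+1)) ?(proj2 (IH k.+1)) addnC.
Qed.

Lemma uniq_cons2 (X Y : seq (seq bool)) :
  uniq (map (cons true) X ++ map (cons false) Y) = uniq X && uniq Y.
Proof.
rewrite cat_uniq !map_inj_uniq; try by move=> x y [].
suff -> : has (mem (map (cons true) X)) (map (cons false) Y) = false by [].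
by apply/negbTE/hasP => [[z /mapP [y _ ->] /mapP [x _ []]]].
Qed.

Lemma uniqFG m k : uniq (FG m k).1 /\ uniq (FG m k).2.
Proof.
elim: m k => [|m IH] [|k] //=.
by split; rewrite !uniq_cons2 ?rev_uniq (proj1 (IH k)) ?(proj1 (IH k.+1)) ?(proj2 (IH k.+1)).
Qed.

Lemma FG_nil m k : m < k -> (FG m k).1 = [::] /\ (FG m k).2 = [::].
Proof.
move=> lt.
have H s : (forall w, (w \in s) = (size w == m) && (count id w == k)) -> s = [::].
  case: s => [|w s] // /(_ w); rewrite mem_head => /esym/andP [/eqP sz /eqP c].
  have := count_size id w; lia.
by split; apply: H => w; [exact: (proj1 (memFG _ _ _)) | exact: (proj2 (memFG _ _ _))].
Qed.

Section HL.
Variables (T U : eqType) (d : T) (e : U) (f : T -> U).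
Lemma head_map_ne s : s != [::] -> head e (map f s) = f (head d s).
Proof. by case: s. Qed.
Lemma last_map_ne s : s != [::] -> last e (map f s) = f (last d s).
Proof. by case: s => // x s _; rewrite /= last_map. Qed.
Lemma head_rev_ne s : s != [::] -> head d (rev s) = last d s.
Proof. by case/lastP: s => // s x _; rewrite rev_rcons last_rcons. Qed.
Lemma last_rev_ne s : s != [::] -> last d (rev s) = head d s.
Proof. by case: s => // x s _; rewrite rev_cons last_rcons. Qed.
Lemma head_cat_ne s1 s2 : s1 != [::] -> head d (s1 ++ s2) = head d s1.
Proof. by case: s1. Qed.
Lemma last_cat_ne s1 s2 : s2 != [::] -> last d (s1 ++ s2) = last d s2.
Proof. by move=> ne; rewrite last_cat; case: s2 ne. Qed.
End HL.

Lemma FG_ne m k : k <= m -> (FG m k).1 != [::] /\ (FG m k).2 != [::].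
Proof.
by move=> km; split; rewrite -size_eq0 ?(proj1 (sizeFG _ _)) ?(proj2 (sizeFG _ _)) -lt0n bin_gt0.
Qed.

Lemma rev_ne (T : eqType) (s : seq T) : s != [::] -> rev s != [::].
Proof. by rewrite -!size_eq0 size_rev. Qed.

Lemma endFG m k : k <= m ->
  [/\ head [::] (FG m k).1 = Aw m k, last [::] (FG m k).1 = Bw m k,
      head [::] (FG m k).2 = Cw m k & last [::] (FG m k).2 = Bw m k].
Proof.
rewrite /Aw /Bw /Cw.
elim: m k => [|m IH] [|k] //= km; rewrite ?subn0 ?cats0 //.
have [F1h F1l _ _] := IH k km.
have [F1ne _] := FG_ne (km : k <= m).
have mapne (b : bool) (s : seq (seq bool)) : s != [::] -> map (cons b) s != [::] by case: s.
case: (ltnP m k.+1) => km'.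
  have [-> ->] := FG_nil km'.
  have ekm : k = m by lia.
  rewrite !cats0 !(head_map_ne [::]) ?(last_map_ne [::]) ?head_rev_ne ?last_rev_ne ?F1h ?F1l
      ?mapne ?rev_ne //.
  by rewrite ekm !subSS !subnn /= ?cats0.
have [F3h F3l G2h G2l] := IH k.+1 km'.
have [F3ne G2ne] := FG_ne km'.
rewrite !head_cat_ne ?last_cat_ne ?mapne ?rev_ne // !(head_map_ne [::]) ?(last_map_ne [::]) ?head_rev_ne ?rev_ne //.
rewrite F1h F1l G2l F3l !subSS.
have -> : m - k = (m - k.+1).+1 by lia.
by [].
Qed.

Fixpoint chain (T : Type) (r : T -> T -> Prop) (s : seq T) : Prop :=
  match s with
  | x :: s' => (match s' with [::] => True | y :: _ => r x y end) /\ chain r s'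
  | [::] => True
  end.

Lemma chain_cat (T : eqType) (r : T -> T -> Prop) d s1 s2 :
  chain r s1 -> chain r s2 ->
  (s1 != [::] -> s2 != [::] -> r (last d s1) (head d s2)) -> chain r (s1 ++ s2).
Proof.
elim: s1 => [|x s1 IH]; first by move=> _ c2.
move=> /= [h1 c1] c2 j; split; last first.
  apply: IH => // ne1 ne2; have := j isT ne2; case: (s1) ne1 => //.
by case: s1 h1 c1 j {IH} => [|y s1] //= _ _; case: s2 c2 => // z s2 _ /(_ isT isT).
Qed.

Lemma chain_map (T U : eqType) (r : T -> T -> Prop) (r' : U -> U -> Prop) (f : T -> U) s :
  (forall x y, x \in s -> y \in s -> r x y -> r' (f x) (f y)) -> chain r s -> chain r' (map f s).
Proof.
elim: s => [|x s IH] //=.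
move=> H [h c]; split; last first.
  by apply: IH => // a b ha hb; apply: H; rewrite inE ?ha ?hb orbT.
case: s h {IH c} H => [|y s] //= h H; apply: H => //; rewrite !inE eqxx ?orbT //.
Qed.

Lemma chain_rev (T : eqType) (r : T -> T -> Prop) s :
  (forall x y, r x y -> r y x) -> chain r s -> chain r (rev s).
Proof.
move=> sym; elim: s => [|x s IH] //= [h c].
rewrite rev_cons -cats1; apply: (chain_cat (d:=x)) => //; first exact: IH.
case: s h {IH c} => [|y s] //= h _ _; rewrite rev_cons last_rcons; exact: sym.
Qed.

Lemma chain_nth (T : Type) (r : T -> T -> Prop) s d i :
  chain r s -> i.+1 < size s -> r (nth d s i) (nth d s i.+1).
Proof.
elim: s i => [|x s IH] i //= [h c]; case: i => [|i] /=.
  by case: s h {IH c}.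
by move=> lt; apply: IH.
Qed.

Definition wstep (u v : seq bool) : Prop :=
  size v = size u /\ exists a b, [/\ nth false u a, ~~ nth false u b, b < size u,
   (forall i, nth false v i = if i == a then false else if i == b then true else nth false u i) &
   (forall i, strictly_between a b i -> nth false u i) \/
   (forall i, strictly_between a b i -> ~~ nth false u i)].

Lemma wstep_cons c u v : wstep u v -> wstep (c :: u) (c :: v).
Proof.
move=> [sz [a [b [ha hb hbs hv hh]]]]; split; first by rewrite /= sz.
exists a.+1, b.+1; split => //; first by case=> [|i] //=; rewrite !eqSS.
have sb i : strictly_between a.+1 b.+1 i -> exists2 j, i = j.+1 & strictly_between a b j.
  case: i => [|j]; rewrite /strictly_between ?minnSS ?maxnSS //; by exists j.
by case: hh => H; [left|right] => i /sb [j -> /H].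
Qed.

Lemma wstep_sym u v : wstep u v -> wstep v u.
Proof.
move=> [sz [a [b [ha hb hbs hv hh]]]].
have ab : a != b by apply: contraNneq hb => <-.
have has : a < size u by rewrite ltnNge; apply: contraTN ha => H; rewrite nth_default.
split => //; exists b, a; rewrite !hv eqxx (negbTE ab) eq_sym (negbTE ab) eqxx sz; split => //.
  move=> i; case: (eqVneq i b) => [->|ib]; first by rewrite (negbTE hb).
  case: (eqVneq i a) => [->|ia] //.
  by rewrite hv (negbTE ia) (negbTE ib).
have sbx i : strictly_between b a i -> strictly_between a b i /\ i != a /\ i != b.
  rewrite /strictly_between => /andP [h1 h2]; rewrite minnC maxnC h1 h2.
  by split => //; split; apply/eqP => E; subst i; lia.
case: hh => H; [left|right] => i /sbx [/H hi [ia ib]]; rewrite hv (negbTE ia) (negbTE ib) //.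
Qed.

Lemma nth_nseq_cat (q : nat) (c : bool) s i :
  nth false (nseq q c ++ s) i = if i < q then c else nth false s (i - q).
Proof. by rewrite nth_cat size_nseq nth_nseq; case: ltnP. Qed.

Lemma wstepJ1 s : wstep (true :: false :: s) (false :: true :: s).
Proof.
split => //; exists 0, 1; split => //; first by case=> [|[|i]].
by left => i; rewrite /strictly_between; lia.
Qed.

Lemma wstepJ2 q (c : bool) s :
  wstep (true :: nseq q c ++ false :: s) (false :: nseq q c ++ true :: s).
Proof.
split; first by rewrite /= !size_cat.
exists 0, q.+1; split => //=.
- by rewrite nth_nseq_cat ltnn subnn.
- by rewrite size_cat size_nseq /= addnS ltnS leq_addr.
- case=> [|i] //=; rewrite eqSS !nth_nseq_cat.
  case: (ltnP i q) => iq; first by rewrite (ltn_eqF iq).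
  case: eqP => [->|]; first by rewrite subnn.
  by move=> ne; have -> : i - q = (i - q.+1).+1 by lia.
have H i : strictly_between 0 q.+1 i -> nth false (true :: nseq q c ++ false :: s) i = c.
  rewrite /strictly_between => /andP [h1 h2]; case: i h1 h2 => [|i] //= _ h2.
  by rewrite nth_nseq_cat -ltnS h2.
by case: c H => H; [left|right] => i /H ->.
Qed.

Lemma nseqS_cat (T : Type) q (c : T) s : nseq q.+1 c ++ s = nseq q c ++ c :: s.
Proof. by elim: q => //= q <-. Qed.

Lemma chainFG m k : chain wstep (FG m k).1 /\ chain wstep (FG m k).2.
Proof.
elim: m k => [|m IH] [|k] //=.
have mc (b : bool) X : chain wstep X -> chain wstep (map (cons b) X).
  by apply: chain_map => x y _ _; apply: wstep_cons.
have mapne (b : bool) (s : seq (seq bool)) : map (cons b) s != [::] -> s != [::] by case: s.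
have le_of (j : nat) : (FG m j).1 != [::] \/ (FG m j).2 != [::] -> j <= m.
  rewrite leqNgt => H; apply/negP => /FG_nil [E1 E2]; rewrite E1 E2 in H; by case: H.
have [c1 _] := IH k; have [c3 c2] := IH k.+1.
split; apply: (chain_cat (d:=[::])); rewrite ?mc ?chain_rev //; try exact: mc;
  try (apply: mc; apply: chain_rev => //; exact: wstep_sym);
  move=> /mapne ne1 /mapne ne2.
- rewrite (last_map_ne [::]) // (head_map_ne [::]) //.
  have km : k <= m by apply: le_of; left.
  have km' : k < m by apply: le_of; right.
  have [_ -> _ _] := endFG km; have [_ _ -> _] := endFG km'.
  rewrite /Bw /Cw; have -> : m - k = (m - k.+1).+1 by lia.
  exact: wstepJ1.
  have {}ne1 : (FG m k).1 != [::] by move: ne1; rewrite -!size_eq0 size_rev.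
  rewrite (last_map_ne [::]) ?rev_ne // (head_map_ne [::]) // last_rev_ne //.
  have km : k <= m by apply: le_of; left.
  have km' : k < m by apply: le_of; left.
  have [-> _ _ _] := endFG km; have [-> _ _ _] := endFG km'.
  rewrite /Aw nseqS_cat; have -> : m - k = (m - k.+1).+1 by lia.
  exact: wstepJ2.
Qed.

Definition wset m (w : seq bool) : {set 'I_m} := [set i : 'I_m | nth false w i].

Lemma in_set_of m w (i : 'I_m) : (i \in wset m w) = nth false w i.
Proof. by rewrite inE. Qed.

Lemma wstep_set m u v : size u = m -> wstep u v -> csmc_step (wset m u) (wset m v).
Proof.
move=> su [sz [a [b [ha hb hbs hv hh]]]].
have has : a < m by rewrite -su ltnNge; apply: contraTN ha => H; rewrite nth_default.
rewrite su in hbs.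
exists (Ordinal has), (Ordinal hbs); split.
- by rewrite in_set_of.
- by rewrite in_set_of.
- apply/setP => [[i im]]; rewrite !inE hv -!val_eqE /=.
  case E1: (i == a); case E2: (i == b); rewrite /= ?orbT ?orbF ?andbT //.
  by move/eqP: E1 => E1; move/eqP: E2 => E2; rewrite -E1 E2 in ha; rewrite ha in hb.
- by case: hh => H; [left|right] => k /H; rewrite in_set_of.
Qed.

Lemma csmc_compl m (S T : {set 'I_m}) : csmc_step S T -> csmc_step (~: S) (~: T).
Proof.
move=> [a [b [ha hb -> hh]]].
have ab : a != b by apply: contraNneq hb => <-.
exists b, a; split; rewrite ?inE ?ha ?hb //.
- apply/setP => i; rewrite !inE.
  case E1: (i == a); case E2: (i == b); rewrite /= ?orbT ?orbF ?andbT ?andbF //.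
  by move/eqP: E1 => E1; rewrite E1 (negbTE ab) in E2.
- have sb i : strictly_between b a i = strictly_between a b i.
    by rewrite /strictly_between minnC maxnC.
  by case: hh => H; [right|left] => k; rewrite sb inE ?negbK => /H.
Qed.

Lemma set_of_negb m w : size w = m -> wset m (map negb w) = ~: wset m w.
Proof.
by move=> sw; apply/setP => i; rewrite !inE (nth_map false) // sw.
Qed.

Lemma card_set_of m w : size w = m -> #|wset m w| = count id w.
Proof.
move=> sw.
rewrite cardE /enum_mem size_filter.
rewrite -[in RHS](mkseq_nth false w) /mkseq count_map sw -val_enum_ord count_map.
by rewrite enumT; apply: eq_count => i /=; rewrite inE.
Qed.

Definition word_of m (S : {set 'I_m}) : seq bool :=
  mkseq (fun j => if insub j is Some i then i \in S else false) m.

Lemma size_word_of m (S : {set 'I_m}) : size (word_of S) = m.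
Proof. by rewrite size_mkseq. Qed.

Lemma word_ofK m (S : {set 'I_m}) : wset m (word_of S) = S.
Proof.
by apply/setP => i; rewrite inE nth_mkseq // valK.
Qed.

Lemma set_of_inj m u v : size u = m -> size v = m -> wset m u = wset m v -> u = v.
Proof.
move=> su sv E; apply: (@eq_from_nth _ false); first by rewrite su sv.
move=> i; rewrite su => im.
by have := in_set_of v (Ordinal im); rewrite -E in_set_of /= => ->.
Qed.

Theorem theorem6 (n : nat) : 1 <= n ->
  let N := 'C(2 * n, n) in
  exists L : seq {set 'I_(2 * n)},
    [/\ size L = N, uniq L,
        (forall S : {set 'I_(2 * n)}, (S \in L) = (#|S| == n)),
        (forall i, i < N %/ 2 ->
           nth set0 L (i + N %/ 2) = ~: nth set0 L i) &
        (forall i, i < N ->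
           csmc_step (nth set0 L i) (nth set0 L ((i + 1) %% N)))].
Proof.
case: n => // k _ N.
set m1 := 2 * k + 1.
have em : 2 * k.+1 = m1.+1 by rewrite /m1; lia.
have km : k <= m1 by rewrite /m1; lia.
set P := (FG m1 k).1.
have memP w : (w \in P) = (size w == m1) && (count id w == k) by exact: (proj1 (memFG _ _ _)).
have szP w : w \in P -> size w = m1 by rewrite memP => /andP [/eqP].
set W := map (cons true) P.
have szW w : w \in W -> size w = 2 * k.+1 by case/mapP => p /szP sp ->; rewrite em /= sp.
set LS := map (wset (2 * k.+1)%N) W.
have sLS : size LS = 'C(m1, k) by rewrite !size_map (proj1 (sizeFG _ _)).
have hN : N = 2 * 'C(m1, k).
  have e : 'C(m1, k.+1) = 'C(m1, k).
    by rewrite -(bin_sub km); have -> : m1 - k = k.+1 by rewrite /m1; lia.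
  by rewrite /N em binS e mul2n addnn.
have hN2 : N %/ 2 = size LS by rewrite hN sLS mulKn.
have Pne : P != [::] by have [] := FG_ne km.
have [Ph Pl _ _] := endFG km.
have LSne : LS != [::] by move: Pne; rewrite -!size_eq0 !size_map.
have LSh : head set0 LS = wset (2 * k.+1)%N (true :: Aw m1 k).
  by rewrite (head_map_ne [::]) ?(head_map_ne [::]) ?Ph //; move: Pne; rewrite -!size_eq0 !size_map.
have LSl : last set0 LS = wset (2 * k.+1)%N (true :: Bw m1 k).
  by rewrite (last_map_ne [::]) ?(last_map_ne [::]) ?Pl //; move: Pne; rewrite -!size_eq0 !size_map.
have z0 : 0 < 2 * k.+1 by rewrite em.
set z := Ordinal z0.
have zLS Y : Y \in LS -> z \in Y.
  by case/mapP => w /mapP [p _ ->] ->; rewrite in_set_of.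
exists (LS ++ map (@setC _) LS); split.
- have sC : size (map (@setC _) LS) = size LS by apply: size_map.
  by rewrite size_cat sC sLS hN mul2n addnn.
- rewrite cat_uniq (map_inj_uniq (@setC_inj _)).
  rewrite (map_inj_in_uniq (f := wset (2 * k.+1)%N)); last first.
    by move=> x y /szW sx /szW sy; apply: set_of_inj.
  have ci : injective (cons true) by move=> x y [].
  rewrite (map_inj_uniq ci) (proj1 (uniqFG _ _)) /=.
  rewrite andbT; apply/hasP => [[X /mapP [Y /zLS zY ->] /zLS]]; by rewrite inE zY.
- move=> S; rewrite mem_cat; apply/idP/eqP.
    case/orP => [/mapP [w /mapP [p pP ->] ->] | /mapP [Y /mapP [w /mapP [p pP ->] ->] ->]].
      rewrite card_set_of; last by rewrite em /= (szP _ pP).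
      by move: pP; rewrite memP /= => /andP [_ /eqP ->].
    rewrite -set_of_negb; last by rewrite em /= (szP _ pP).
    rewrite card_set_of; last by rewrite size_map em /= (szP _ pP).
    rewrite /= count_map; have := count_predC id p.
    have -> : count (preim negb id) p = count (predC id) p by apply: eq_count.
    by move: pP; rewrite memP => /andP [/eqP sp /eqP ->]; rewrite sp /m1; lia.
  move=> cS.
  have sw : size (word_of S) = m1.+1 by rewrite size_word_of em.
  have cw : count id (word_of S) = k.+1.
    by rewrite -(card_set_of (m := (2 * k.+1)%N)) ?word_ofK // size_word_of.
  have wS := word_ofK S.
  move: (word_of S) sw cw wS => [|c p] // [sp]; case: c => /= cp wS.
    apply/orP; left; apply/mapP; exists (true :: p) => //.
    by apply/mapP; exists p => //; rewrite memP sp eqxx /=; apply/eqP; lia.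
  apply/orP; right; apply/mapP; exists (~: S); last by rewrite setCK.
  have E := set_of_negb (m := (2 * k.+1)%N) (w := false :: p).
  rewrite -wS -E; last by rewrite em /= sp.
  apply/mapP; exists (true :: map negb p) => //; apply/mapP; exists (map negb p) => //.
  rewrite memP size_map sp eqxx /= count_map; have := count_predC id p.
  have -> : count (preim negb id) p = count (predC id) p by apply: eq_count.
  by rewrite sp /m1; move=> H; apply/eqP; lia.
- move=> i; rewrite hN2 => iL.
  by rewrite nth_cat ltnNge leq_addl /= addnK (nth_map set0) // nth_cat iL.
- move=> i iN.
  have chW : chain wstep W.
    by apply: chain_map (proj1 (chainFG _ _)) => x y _ _; apply: wstep_cons.
  have chLS : chain (@csmc_step (2 * k.+1)%N) LS.
    by apply: chain_map chW => x y /szW sx _; apply: wstep_set.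
  have chC : chain (@csmc_step (2 * k.+1)%N) (map (@setC _) LS).
    by apply: chain_map chLS => x y _ _; apply: csmc_compl.
  have jn : csmc_step (last set0 LS) (~: head set0 LS).
    rewrite LSl LSh -set_of_negb; last by rewrite em /= /Aw size_cat !size_nseq /m1; lia.
    apply: wstep_set; first by rewrite em /= /Bw size_cat !size_nseq /m1; lia.
    have e : m1 - k = k.+1 by rewrite /m1; lia.
    rewrite /Aw /Bw e nseqS_cat /= map_cat !map_nseq /=.
    rewrite map_nseq /=; exact: wstepJ2.
  have chL : chain (@csmc_step (2 * k.+1)%N) (LS ++ map (@setC _) LS).
    by apply: (chain_cat (d:=set0)) => // _ _; rewrite (head_map_ne set0).
  have sL : size (LS ++ map (@setC _) LS) = N.
    by rewrite size_cat size_map hN sLS mul2n addnn.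
  case: (ltnP i.+1 N) => h.
    by rewrite addn1 modn_small //; apply: chain_nth => //; rewrite sL.
  have ei : i = N.-1 by lia.
  have -> : (i + 1) %% N = 0 by rewrite addn1 ei prednK ?modnn //; lia.
  rewrite ei -sL nth_last nth0 head_cat_ne // last_cat_ne; last by rewrite -size_eq0 size_map size_eq0.
  rewrite (last_map_ne set0) //.
  by have := csmc_compl jn; rewrite setCK.
Qed.
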